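(* Consider the operational scenario of a multi-task model with three tasks and binary labels $y\in\{\pm1\}$ (preparations $\mathbf{S}_{\vec{x}}$, $\vec{x}\in D$; effects $\mathbf{E}^k_{\pm}$, $k=1,2,3$, together with $\Omega$ and $\emptyset$). Suppose the effect densities satisfy the operational equivalence $$\tfrac13\mathbf{E}^1_{+}+\tfrac13\mathbf{E}^2_{+}+\tfrac13\mathbf{E}^3_{+}\ \sim\ \tfrac13\mathbf{E}^1_{-}+\tfrac13\mathbf{E}^2_{-}+\tfrac13\mathbf{E}^3_{-},$$ and that $s_1,\dots,s_6$ are preparation densities satisfying $$\tfrac12 s_1+\tfrac12 s_2\ \sim\ \tfrac12 s_3+\tfrac12 s_4\ \sim\ \tfrac12 s_5+\tfrac12 s_6.$$ If the multi-task model is noncontextual, then $$P(\mathbf{E}^1_+\mid s_1)+P(\mathbf{E}^2_+\mid s_3)+P(\mathbf{E}^3_+\mid s_5)\le\tfrac52.$$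
   Context: A multi-task model is a family of conditional distributions $\mathcal{P}^k(y\mid\vec{x})$, $k=1,2,3$, $y\in\{\pm1\}$, $\vec{x}\in D$. Its operational scenario has preparations $\mathbf{S}_{\vec{x}}$, effects $\mathbf{E}^k_y$, trivial effect $\Omega$ and null effect $\emptyset$, with statistics $P(\mathbf{E}^k_y\mid\mathbf{S}_{\vec{x}})=\mathcal{P}^k(y\mid\vec{x})$, $P(\Omega\mid\mathbf{S})=1$, $P(\emptyset\mid\mathbf{S})=0$. Preparation (resp. effect) densities are finite convex combinations of preparations (resp. effects), with statistics extended bilinearly. Two preparation densities are operationally equivalent ($\sim$) iff they give equal probabilities for all effects; two effect densities are operationally equivalent iff they give equal probabilities for all preparations. An ontological model consists of a measure space $\Lambda$, a probability density $\mu_{\mathbf{S}}$ on $\Lambda$ for each preparation and a response function $\xi_{\mathbf{E}}:\Lambda\to[0,1]$ for each effect, with $\xi_\Omega\equiv1$, $\xi_\emptyset\equiv0$, extended linearly to densities, such that $P(\mathbf{E}\mid\mathbf{S})=\int_\Lambda\mu_{\mathbf{S}}(\lambda)\xi_{\mathbf{E}}(\lambda)d\lambda$. It is noncontextual if operationally equivalent preparation densities have identical $\mu$ and operationally equivalent effect densities have identical $\xi$. The multi-task model is noncontextual iff its operational scenario admits a noncontextual ontological model. *)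

(* Defs.v *)
From HB Require Import structures.
From mathcomp Require Import all_boot all_order all_algebra.
From mathcomp Require Import all_classical all_reals all_analysis.

Set Implicit Arguments.
Unset Strict Implicit.
Unset Printing Implicit Defensive.

Import Order.TTheory GRing.Theory Num.Theory.
Local Open Scope ring_scope.

(* Task indices k = 1,2,3 are represented by 'I_3 (values 0,1,2);
   labels y = +1 / -1 are represented by true / false. *)
Definition task1 : 'I_3 := @Ordinal 3 0 isT.
Definition task2 : 'I_3 := @Ordinal 3 1 isT.
Definition task3 : 'I_3 := @Ordinal 3 2 isT.

Section MultiTask.
Variables (R : realType) (D : Type).

(* A multi-task model: P k y x = P^k(y | x). *)
Definition multitask_model (P : 'I_3 -> bool -> D -> R) : Prop :=
  (forall k y x, 0 <= P k y x) /\ (forall k x, P k true x + P k false x = 1).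

Inductive effect : Type := Eff of 'I_3 & bool | Omega | Null.

Definition Pop (P : 'I_3 -> bool -> D -> R) (e : effect) (x : D) : R :=
  match e with Eff k y => P k y x | Omega => 1 | Null => 0 end.

(* A density (finite convex combination) over T, as a list of
   (weight, element) pairs with nonnegative weights summing to 1. *)
Definition density (T : Type) (s : seq (R * T)) : Prop :=
  all (fun p => 0 <= p.1) s /\ \sum_(p <- s) p.1 = 1.

Definition mix2 (T : Type) (a : R) (s : seq (R * T)) (b : R) (t : seq (R * T)) :
  seq (R * T) :=
  [seq (a * p.1, p.2) | p <- s] ++ [seq (b * p.1, p.2) | p <- t].

Definition Pprep (P : 'I_3 -> bool -> D -> R) (e : effect) (s : seq (R * D)) : R :=
  \sum_(p <- s) p.1 * Pop P e p.2.

Definition Peff (P : 'I_3 -> bool -> D -> R) (f : seq (R * effect)) (x : D) : R :=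
  \sum_(q <- f) q.1 * Pop P q.2 x.

Definition prep_equiv P (s s' : seq (R * D)) : Prop :=
  forall e : effect, Pprep P e s = Pprep P e s'.

Definition effect_equiv P (f f' : seq (R * effect)) : Prop :=
  forall x : D, Peff P f x = Peff P f' x.

Definition mu_dens (L : Type) (mu : D -> L -> R) (s : seq (R * D)) (l : L) : R :=
  \sum_(p <- s) p.1 * mu p.2 l.
Definition xi_dens (L : Type) (xi : effect -> L -> R) (f : seq (R * effect)) (l : L) : R :=
  \sum_(q <- f) q.1 * xi q.2 l.

Local Open Scope ereal_scope.

Definition ontological_model (P : 'I_3 -> bool -> D -> R)
    (d : measure_display) (L : measurableType d) (nu : {measure set L -> \bar R})
    (mu : D -> L -> R) (xi : effect -> L -> R) : Prop :=
  [/\ (forall x, measurable_fun [set: L] (mu x)),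
      (forall x l, (0 <= mu x l)%R) &
      (forall x, \int[nu]_l (mu x l)%:E = 1)] /\
  [/\ (forall e, measurable_fun [set: L] (xi e)),
      (forall e l, (0 <= xi e l <= 1)%R),
      (forall l, xi Omega l = 1%R) &
      (forall l, xi Null l = 0%R)] /\
  (forall e x, \int[nu]_l (mu x l * xi e l)%:E = (Pop P e x)%:E).

Local Close Scope ereal_scope.

Definition noncontextual_model P (L : Type) (mu : D -> L -> R) (xi : effect -> L -> R) : Prop :=
  (forall s s' : seq (R * D), density s -> density s' -> prep_equiv P s s' ->
     forall l, mu_dens mu s l = mu_dens mu s' l) /\
  (forall f f' : seq (R * effect), density f -> density f' -> effect_equiv P f f' ->
     forall l, xi_dens xi f l = xi_dens xi f' l).

Definition noncontextual (P : 'I_3 -> bool -> D -> R) : Prop :=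
  exists (d : measure_display) (L : measurableType d) (nu : {measure set L -> \bar R})
         (mu : D -> L -> R) (xi : effect -> L -> R),
    ontological_model P nu mu xi /\ noncontextual_model P mu xi.

End MultiTask.

(* Main.v *)
Require Import Defs.
From HB Require Import structures.
From mathcomp Require Import lra.
From mathcomp Require Import all_boot all_order all_algebra.
From mathcomp Require Import all_classical all_reals all_analysis.
Import Order.TTheory GRing.Theory Num.Theory.
Local Open Scope ring_scope.

Lemma ptw (R : realType) (a b c m x1 x2 x3 : R) :
  0 <= a -> 0 <= b -> 0 <= c -> a <= 2 * m -> b <= 2 * m -> c <= 2 * m ->
  0 <= x1 <= 1 -> 0 <= x2 <= 1 -> 0 <= x3 <= 1 -> x1 + x2 + x3 = 3/2 ->
  a*x1 + b*x2 + c*x3 <= a/2 + b/2 + c/2 + m.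
Proof.
move=> a0 b0 c0 am bm cm /andP[h1 h1'] /andP[h2 h2'] /andP[h3 h3'] hs.
have e3 : x3 = 3/2 - x1 - x2 by lra.
subst x3.
have [d1|d1] := lerP x1 (1/2); have [d2|d2] := lerP x2 (1/2); nra.
Qed.

Lemma absw (R : realType) (T : Type) (t : seq (R * T)) (F : T -> R) :
  all (fun q => 0 <= q.1) t ->
  \sum_(q <- t) q.1 * F q.2 = \sum_(q <- t) `|q.1| * F q.2.
Proof.
elim: t => [|q t IH] /=; first by rewrite !big_nil.
by move=> /andP[q0 /IH h]; rewrite !big_cons h ger0_norm.
Qed.

Section Aux.
Variables (R : realType) (D : Type) (P : 'I_3 -> bool -> D -> R).
Variables (d : measure_display) (L : measurableType d)
  (nu : {measure set L -> \bar R}) (mu : D -> L -> R) (xi : effect -> L -> R).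
Hypothesis Hom : ontological_model P nu mu xi.

Lemma G (t : seq (R * (D * effect))) : all (fun q => 0 <= q.1) t ->
  (\int[nu]_l (\sum_(q <- t) q.1 * (mu q.2.1 l * xi q.2.2 l))%:E =
   (\sum_(q <- t) q.1 * Pop P q.2.2 q.2.1)%:E)%E.
Proof.
move=> ht; case: Hom => [[Hm1 Hm2 Hm3] [[Hx1 Hx2 Hx3 Hx4] Hint]].
have E1 : forall l, \sum_(q <- t) q.1 * (mu q.2.1 l * xi q.2.2 l) =
   \sum_(q <- t) `|q.1| * (mu q.2.1 l * xi q.2.2 l).
  by move=> l; rewrite (@absw _ _ t (fun p => mu p.1 l * xi p.2 l) ht).
have E2 : \sum_(q <- t) q.1 * Pop P q.2.2 q.2.1 =
   \sum_(q <- t) `|q.1| * Pop P q.2.2 q.2.1.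
  by rewrite (@absw _ _ t (fun p => Pop P p.2 p.1) ht).
have -> : (\int[nu]_l (\sum_(q <- t) q.1 * (mu q.2.1 l * xi q.2.2 l))%:E =
   \int[nu]_l (\sum_(q <- t) (`|q.1| * (mu q.2.1 l * xi q.2.2 l))%:E))%E.
  by apply: eq_integral => l _; rewrite E1 sumEFin.
rewrite E2 -sumEFin ge0_integral_sum //.
- apply: eq_bigr => q _.
  rewrite (_ : (fun l => _) = (fun l => (`|q.1|)%:E * (mu q.2.1 l * xi q.2.2 l)%:E)%E); last first.
    by apply: funext => l.
  rewrite ge0_integralZl_EFin //.
  + by rewrite Hint.
  + move=> l _; rewrite lee_fin mulr_ge0 //; by case/andP: (Hx2 q.2.2 l).
  + apply/measurable_realfun.measurable_EFinP; exact: measurable_realfun.measurable_funM.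
- move=> q; apply/measurable_realfun.measurable_EFinP; apply: measurable_realfun.measurable_funM => //.
  exact: measurable_realfun.measurable_funM.
- move=> q l _; rewrite lee_fin mulr_ge0 // mulr_ge0 //; by case/andP: (Hx2 q.2.2 l).
Qed.


Lemma sumL (t : seq (R * D)) (w : R) (e : effect) l :
  \sum_(q <- [seq (w * p.1, (p.2, e)) | p <- t]) q.1 * (mu q.2.1 l * xi q.2.2 l)
  = w * mu_dens mu t l * xi e l.
Proof.
rewrite big_map /mu_dens mulr_sumr mulr_suml; apply: eq_bigr => p _ /=.
by rewrite !mulrA.
Qed.

Lemma sumP (t : seq (R * D)) (w : R) (e : effect) :
  \sum_(q <- [seq (w * p.1, (p.2, e)) | p <- t]) q.1 * Pop P q.2.2 q.2.1
  = w * Pprep P e t.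
Proof.
rewrite big_map /Pprep mulr_sumr; apply: eq_bigr => p _ /=.
by rewrite !mulrA.
Qed.

Lemma allw (t : seq (R * D)) (w : R) (e : effect) :
  all (fun p => 0 <= p.1) t -> 0 <= w ->
  all (fun q => 0 <= q.1) [seq (w * p.1, (p.2, e)) | p <- t].
Proof.
move=> + w0; elim: t => [|p t IH] //= /andP[p0 /IH ->].
by rewrite mulr_ge0.
Qed.

Lemma mu_dens_ge0 (t : seq (R * D)) l :
  all (fun p => 0 <= p.1) t -> 0 <= mu_dens mu t l.
Proof.
case: Hom => [[Hm1 Hm2 Hm3] _].
rewrite /mu_dens; elim: t => [|p t IH] /=; first by rewrite big_nil.
move=> /andP[p0 /IH h]; rewrite big_cons addr_ge0 // mulr_ge0 //.
Qed.

End Aux.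

Lemma mu_dens_mix (R : realType) (D L : Type) (mu : D -> L -> R) a s b t l :
  mu_dens mu (mix2 a s b t) l = a * mu_dens mu s l + b * mu_dens mu t l.
Proof.
rewrite /mu_dens /mix2 big_cat !big_map !mulr_sumr; congr (_ + _);
  apply: eq_bigr => p _ /=; by rewrite mulrA.
Qed.

Lemma dens_mix (R : realType) (T : Type) (s t : seq (R * T)) :
  density s -> density t -> density (mix2 2^-1 s 2^-1 t).
Proof.
move=> [s0 s1] [t0 t1]; split.
  rewrite /mix2 all_cat; apply/andP; split.
    elim: s s0 {s1} => [|p s IH] //= /andP[p0 /IH ->]; rewrite mulr_ge0 //.
  elim: t t0 {t1} => [|p t IH] //= /andP[p0 /IH ->]; rewrite mulr_ge0 //.
rewrite /mix2 big_cat !big_map /= -!mulr_sumr s1 t1; lra.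
Qed.

Lemma POmega (R : realType) (D : Type) (P : 'I_3 -> bool -> D -> R) s :
  density s -> Pprep P Omega s = 1.
Proof.
move=> [_ <-]; rewrite /Pprep; apply: eq_bigr => p _ /=; by rewrite mulr1.
Qed.



Theorem lemma1 (R : realType) (D : Type) (P : 'I_3 -> bool -> D -> R)
  (HP : multitask_model P)
  (Heff : effect_equiv P
     [:: (3^-1, Eff task1 true); (3^-1, Eff task2 true); (3^-1, Eff task3 true)]
     [:: (3^-1, Eff task1 false); (3^-1, Eff task2 false); (3^-1, Eff task3 false)])
  (s1 s2 s3 s4 s5 s6 : seq (R * D))
  (Hs1 : density s1) (Hs2 : density s2) (Hs3 : density s3)
  (Hs4 : density s4) (Hs5 : density s5) (Hs6 : density s6)
  (H12_34 : prep_equiv P (mix2 2^-1 s1 2^-1 s2) (mix2 2^-1 s3 2^-1 s4))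
  (H34_56 : prep_equiv P (mix2 2^-1 s3 2^-1 s4) (mix2 2^-1 s5 2^-1 s6))
  (Hnc : noncontextual P) :
  Pprep P (Eff task1 true) s1 + Pprep P (Eff task2 true) s3
    + Pprep P (Eff task3 true) s5 <= 5 / 2.
Proof.
case: Hnc => d [L [nu [mu [xi [Hom [Hncp Hnce]]]]]].
have Hom' := Hom.
case: Hom' => [[Hm1 Hm2 Hm3] [[Hx1 Hx2 Hx3 Hx4] Hint]].
have Hneg k l : xi (Eff k false) l = 1 - xi (Eff k true) l.
  have d1 : density [:: (2^-1 : R, Eff k true); (2^-1, Eff k false)].
    split; rewrite /= ?big_cons ?big_nil /=; lra.
  have d2 : density [:: (2^-1 : R, Omega); (2^-1, Null)].
    split; rewrite /= ?big_cons ?big_nil /=; lra.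
  have d3 : effect_equiv P [:: (2^-1 : R, Eff k true); (2^-1, Eff k false)]
     [:: (2^-1, Omega); (2^-1, Null)].
    move=> x; rewrite /Peff !big_cons !big_nil /=.
    have := HP.2 k x; lra.
  have := Hnce _ _ d1 d2 d3 l.
  rewrite /xi_dens !big_cons !big_nil /= Hx3 Hx4; lra.
have Hsum l : xi (Eff task1 true) l + xi (Eff task2 true) l + xi (Eff task3 true) l = 3/2.
  have d1 : density [:: (3^-1 : R, Eff task1 true); (3^-1, Eff task2 true); (3^-1, Eff task3 true)].
    split; rewrite /= ?big_cons ?big_nil /=; lra.
  have d2 : density [:: (3^-1 : R, Eff task1 false); (3^-1, Eff task2 false); (3^-1, Eff task3 false)].
    split; rewrite /= ?big_cons ?big_nil /=; lra.
  have := Hnce _ _ d1 d2 Heff l.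
  rewrite /xi_dens !big_cons !big_nil /= !Hneg; lra.
have D12 := @dens_mix _ _ _ _ Hs1 Hs2.
have D34 := @dens_mix _ _ _ _ Hs3 Hs4.
have D56 := @dens_mix _ _ _ _ Hs5 Hs6.
have e1 l := Hncp _ _ D12 D34 H12_34 l.
have e2 l := Hncp _ _ D34 D56 H34_56 l.
have A0 := Hs1.1; have A2 := Hs2.1; have A3 := Hs3.1; have A4 := Hs4.1;
  have A5 := Hs5.1; have A6 := Hs6.1.
pose tL := [seq (1 * p.1, (p.2, Eff task1 true)) | p <- s1] ++
  [seq (1 * p.1, (p.2, Eff task2 true)) | p <- s3] ++
  [seq (1 * p.1, (p.2, Eff task3 true)) | p <- s5].
pose tR := [seq (2^-1 * p.1, (p.2, Omega)) | p <- s1] ++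
  [seq (2^-1 * p.1, (p.2, Omega)) | p <- s3] ++
  [seq (2^-1 * p.1, (p.2, Omega)) | p <- s5] ++
  [seq (1 * p.1, (p.2, Omega)) | p <- mix2 2^-1 s1 2^-1 s2].
have htL : all (fun q => 0 <= q.1) tL.
  by rewrite /tL !all_cat !allw.
have htR : all (fun q => 0 <= q.1) tR.
  by rewrite /tR !all_cat !allw // D12.1.
have eL : \sum_(q <- tL) q.1 * Pop P q.2.2 q.2.1 =
  Pprep P (Eff task1 true) s1 + Pprep P (Eff task2 true) s3
    + Pprep P (Eff task3 true) s5.
  rewrite /tL !big_cat !sumP !mul1r; exact: addrA.
have eR : \sum_(q <- tR) q.1 * Pop P q.2.2 q.2.1 = 5 / 2.
  rewrite /tR !big_cat !sumP !POmega //=; lra.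
rewrite -lee_fin -eL -eR -(@G _ _ _ _ _ _ _ _ Hom _ htL) -(@G _ _ _ _ _ _ _ _ Hom _ htR).
apply: ge0_le_integral => //.
- move=> l _; rewrite lee_fin /tL !big_cat !sumL !mul1r.
  have := Hx2 (Eff task1 true) l; have := Hx2 (Eff task2 true) l;
  have := Hx2 (Eff task3 true) l.
  move=> /andP[? ?] /andP[? ?] /andP[? ?].
  by rewrite !addr_ge0 // mulr_ge0 // (@mu_dens_ge0 _ _ _ _ _ _ _ _ Hom).
- apply/measurable_realfun.measurable_EFinP; apply: measurable_sum => q.
  apply: measurable_realfun.measurable_funM => //.
  exact: measurable_realfun.measurable_funM.
- apply/measurable_realfun.measurable_EFinP; apply: measurable_sum => q.
  apply: measurable_realfun.measurable_funM => //.
  exact: measurable_realfun.measurable_funM.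
- move=> l _; rewrite lee_fin /tL /tR !big_cat !sumL !mul1r !Hx3 !mulr1.
  have m1 := @mu_dens_mix _ _ _ mu (2^-1) s1 (2^-1) s2 l.
  have m2 := @mu_dens_mix _ _ _ mu (2^-1) s3 (2^-1) s4 l.
  have m3 := @mu_dens_mix _ _ _ mu (2^-1) s5 (2^-1) s6 l.
  have f1 := e1 l; have f2 := e2 l.
  rewrite m2 in f1; rewrite m2 m3 in f2.
  have g1 := @mu_dens_ge0 _ _ _ _ _ _ _ _ Hom _ l A0.
  have g2 := @mu_dens_ge0 _ _ _ _ _ _ _ _ Hom _ l A2.
  have g3 := @mu_dens_ge0 _ _ _ _ _ _ _ _ Hom _ l A3.
  have g4 := @mu_dens_ge0 _ _ _ _ _ _ _ _ Hom _ l A4.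
  have g5 := @mu_dens_ge0 _ _ _ _ _ _ _ _ Hom _ l A5.
  have g6 := @mu_dens_ge0 _ _ _ _ _ _ _ _ Hom _ l A6.
  rewrite /=.
  move: (Hx2 (Eff task1 true) l) (Hx2 (Eff task2 true) l) (Hx2 (Eff task3 true) l) (Hsum l).
  move: m1 f1 f2 g1 g2 g3 g4 g5 g6.
  set m := mu_dens mu (mix2 _ s1 _ s2) l.
  set a := mu_dens mu s1 l; set a2 := mu_dens mu s2 l.
  set b := mu_dens mu s3 l; set b2 := mu_dens mu s4 l.
  set c := mu_dens mu s5 l; set c2 := mu_dens mu s6 l.
  set x1 := xi _ l; set x2 := xi _ l; set x3 := xi _ l.
  move=> m1 f1 f2 g1 g2 g3 g4 g5 g6 h1 h2 h3 hs.
  have := @ptw _ a b c m x1 x2 x3 g1 g3 g5.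
  have am : a <= 2 * m by lra.
  have bm : b <= 2 * m by lra.
  have cm : c <= 2 * m by lra.
  move=> /(_ am bm cm h1 h2 h3 hs).
  lra.
Qed.
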